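(* Let $p$ be an odd prime, $d \geqslant 2$, and $V$ a $d$-dimensional vector space over $\mathbb{F}_p$ with basis $\mathbf{b}_1,\ldots,\mathbf{b}_d$. Let $G = \mathrm{Sym}(V)$, $H = \mathrm{AGL}(V)$, and let $T$ be the subgroup of $\mathrm{GL}(V)$ of all matrices that are diagonal with respect to $\mathbf{b}_1,\ldots,\mathbf{b}_d$. Let $l_1 = d(d+1)/2 - 1$. Then there exist subgroups $K_1,\ldots,K_{l_1}$ of $\mathrm{GL}(V)$, each the setwise stabiliser in $\mathrm{GL}(V)$ of a linear subspace of $V$, such that \[ G > H > K_1 > K_1 \cap K_2 > \cdots > \bigcap_{i=1}^{l_1} K_i = T. \]
   Context: $\mathrm{AGL}(V)$ is the group of invertible affine transformations $\mathbf{v} \mapsto \mathbf{v}g + \mathbf{u}$ ($g \in \mathrm{GL}(V)$, $\mathbf{u} \in V$) of $V$, regarded as a subgroup of $\mathrm{Sym}(V)$. All inclusions $>$ are strict. *)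

(* Defs.v *)
From HB Require Import structures.
From mathcomp Require Import all_boot all_order all_algebra all_fingroup.
Set Implicit Arguments. Unset Strict Implicit. Unset Printing Implicit Defensive.
Import GRing.Theory.
Local Open Scope ring_scope.

(* V = F_p^d as row vectors 'rV['F_p]_d, basis b_1..b_d = standard basis.
   Matrices act on the right: v |-> v *m g. *)
Section Defs.
Variables (p d : nat).

Definition vec := 'rV['F_p]_d.

Definition SymV : {set {perm vec}} := [set: {perm vec}].

Definition AGLV : {set {perm vec}} :=
  [set s : {perm vec} | [exists g : 'M['F_p]_d, exists u : vec,
      (g \in unitmx) && [forall v : vec, s v == v *m g + u]]].

Definition GLV : {set {perm vec}} :=
  [set s : {perm vec} | [exists g : 'M['F_p]_d,
      (g \in unitmx) && [forall v : vec, s v == v *m g]]].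

Definition TV : {set {perm vec}} :=
  [set s : {perm vec} | [exists g : 'M['F_p]_d,
      [&& g \in unitmx,
          [forall i, forall j, (i != j) ==> (g i j == 0)] &
          [forall v : vec, s v == v *m g]]]].

Definition subsp (W : 'M['F_p]_d) : {set vec} := [set v : vec | (v <= W)%MS].

Definition GLstab (W : 'M['F_p]_d) : {set {perm vec}} :=
  [set s in GLV | s @: subsp W == subsp W].

End Defs.

(* Main.v *)
Require Import Defs.
From HB Require Import structures.
From mathcomp Require Import all_boot all_order all_algebra all_fingroup.
From mathcomp Require Import zify.


Definition nxt (d : nat) (ab : nat * nat) : nat * nat :=
  let (a, b) := ab in
  if (if a == 0 then b.+2 < d else b.+1 < d) then (a, b.+1) else (a.+1, a.+1).

Fixpoint dec (d n : nat) : nat * nat :=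
  match n with 0 => (0, 0) | n'.+1 => nxt d (dec d n') end.

Fixpoint B (d a : nat) : nat :=
  match a with 0 => 0 | a'.+1 => B d a' + (d - a') end.

Lemma B_mono d a a' : a <= a' -> B d a <= B d a'.
Proof. elim: a' => [|a' IH]; first by rewrite leqn0 => /eqP ->.
rewrite leq_eqVlt => /orP[/eqP -> //|]; rewrite ltnS => /IH /= h; lia. Qed.

Lemma B_closed d a : a <= d -> B d a * 2 + a * a = a * (2 * d + 1).
Proof. elim: a => [//|a IH] h /=. have := IH (ltnW h). nia. Qed.

Lemma Bd d : B d d = (d * (d + 1)) %/ 2.
Proof. have h := @B_closed d d (leqnn d).
have -> : d * (d + 1) = B d d * 2 by nia. by rewrite mulnK. Qed.

Definition lex (x y : nat * nat) := (x.1 < y.1) || ((x.1 == y.1) && (x.2 < y.2)).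

Lemma lex_nxt d x : lex x (nxt d x).
Proof. case: x => a b /=; rewrite /lex; case: ifP => _ /=; lia. Qed.

Lemma lex_trans x y z : lex x y -> lex y z -> lex x z.
Proof. rewrite /lex; lia. Qed.

Lemma dec_mono d n m : n < m -> lex (dec d n) (dec d m).
Proof. elim: m => [//|m IH]; rewrite ltnS leq_eqVlt => /orP[/eqP ->|h] /=.
  exact: lex_nxt. exact: lex_trans (IH h) (lex_nxt _ _). Qed.

Lemma dec_inv d n : 2 <= d -> n < B d d - 1 ->
  let: (a, b) := dec d n in
  [/\ a <= b, b < d, (a == 0) ==> (b.+2 <= d) & n + (a != 0) = B d a + (b - a)].
Proof.
move=> d2; elim: n => [|n IH] h /=; first by split => //; lia.
have := IH (ltnW h); case: (dec d n) => a b [h1 h2 h3 h4] /=.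
case: (eqVneq a 0) => a0.
- subst a; move: h3 h4 => /= h3 h4; case: ifP => c /=; split => //; lia.
- have a0' : (a == 0) = false by apply/negbTE.
  rewrite a0' /= in h3 h4 *.
  case: ifP => c /=; first by rewrite a0' /=; split => //; lia.
  have e : b = d.-1 by lia.
  case: (ltnP a.+1 d) => ad.
    split => //; lia.
  have ed : d = a.+1 by lia.
  subst d. move: h h4; rewrite /= subnn addn0; lia.
Qed.

Lemma dec_hit d a0 b0 : 2 <= d -> a0 <= b0 -> b0 < d -> (a0 == 0) ==> (b0.+2 <= d) ->
  exists2 m, m < B d d - 1 & dec d m = (a0, b0).
Proof.
move=> d2 h1 h2 h3.
have Bm1 : B d a0.+1 <= B d d by apply: B_mono; lia.
have Bm2 : B d 2 <= B d d by apply: B_mono; lia.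
have B2 : B d 2 = d + (d - 1) by rewrite /=; lia.
have B1 : B d a0.+1 = B d a0 + (d - a0) by rewrite /=.
pose m := B d a0 + (b0 - a0) - (a0 != 0).
have mlt : m < B d d - 1.
  rewrite /m; case: (eqVneq a0 0) h3 => [e|a0'] /= h3.
    subst a0; rewrite /= in Bm1 *; lia.
  lia.
exists m => //.
have := @dec_inv d m d2 mlt; case: (dec d m) => a b [g1 g2 g3 g4].
have ea : a = a0.
  case: (ltngtP a a0) => // c;
   [have := @B_mono d a.+1 a0 c | have := @B_mono d a0.+1 a c];
   move=> c'; move: g3 g4 h3 c'; rewrite /m;
   case: (eqVneq a 0) => [ea0|an]; case: (eqVneq a0 0) => [e0|a0n]; subst => /=; lia.
subst a; have Bp : 0 < a0 -> d <= B d a0.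
  move=> a0p; have := @B_mono d 1 a0 a0p; rewrite /=; lia.
congr pair; move: g4 h3; rewrite /m; case: (eqVneq a0 0) => [->|a0n]; rewrite ?a0n /=; lia.
Qed.

Definition inI (ab : nat * nat) (x : nat) := (ab.1 <= x) && (x <= ab.2).

Lemma step_wit d j : 2 <= d -> j < B d d - 1 ->
  exists x y, [/\ x < d, y < d, x != y, inI (dec d j) x && ~~ inI (dec d j) y &
   forall m, m < j -> inI (dec d m) x -> inI (dec d m) y].
Proof.
move=> d2 jl; have := @dec_inv d j d2 jl.
have mono := @dec_mono d.
case E: (dec d j) => [a b] [g1 g2 g3 g4].
exists b, (if a == 0 then b.+1 else a.-1).
case: (eqVneq a 0) g3 => [a0|an] /= g3; rewrite /inI /=.
- subst a; split; try lia.
  move=> m mj; have := mono _ _ mj; rewrite E /lex /=.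
  case: (dec d m) => a' b' /=; lia.
- split; try lia.
  move=> m mj; have := mono _ _ mj; rewrite E /lex /=.
  case: (dec d m) => a' b' /=; lia.
Qed.

Lemma sep d x y : 2 <= d -> x < d -> y < d -> x != y ->
  exists2 m, m < B d d - 1 & inI (dec d m) x && ~~ inI (dec d m) y.
Proof.
move=> d2 xd yd xy.
case: (ltngtP x y) xy => // c _.
- have [m ml e] := @dec_hit d 0 x d2 (leq0n _) xd (ltac:(simpl; lia)).
  exists m => //; rewrite e /inI /=; lia.
- have [m ml e] := @dec_hit d x x d2 (leqnn _) xd (ltac:(case: eqP => //=; lia)).
  exists m => //; rewrite e /inI /=; lia.
Qed.

Set Implicit Arguments. Unset Strict Implicit. Unset Printing Implicit Defensive.
Import GRing.Theory.
Local Open Scope ring_scope.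

Section M.
Variables (p d : nat).
Local Notation V := (vec p d).

Definition Dmx (P : pred 'I_d) : 'M['F_p]_d := \matrix_(i, j) ((i == j) && P i)%:R.

Lemma subspP P (v : V) : (v \in subsp (Dmx P)) = [forall j, ~~ P j ==> (v 0 j == 0)].
Proof.
rewrite inE; apply/submxP/forallP.
- move=> [u ->] j; apply/implyP => Pj; rewrite mxE big1 // => k _.
  rewrite mxE; case: eqP => [->|] /=; first by rewrite (negbTE Pj) mulr0.
  by rewrite mulr0.
- move=> h; exists v; apply/rowP => j; rewrite mxE (bigD1 j) //= big1 ?addr0.
    rewrite mxE eqxx /=; case: (boolP (P j)) => Pj; first by rewrite mulr1.
    by rewrite mulr0; move: (h j); rewrite Pj /= => /eqP.
  move=> k kj; rewrite mxE; case: eqP => [e|] /=; last by rewrite mulr0.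
  by move: kj; rewrite e eqxx.
Qed.

Lemma GLVP (s : {perm V}) : s \in GLV p d ->
  exists2 g : 'M['F_p]_d, g \in unitmx & forall v, s v = v *m g.
Proof.
rewrite inE => /existsP[g /andP[gu /forallP h]].
by exists g => // v; apply/eqP.
Qed.

Lemma stabP P (s : {perm V}) (g : 'M['F_p]_d) :
  s \in GLV p d -> (forall v, s v = v *m g) ->
  (s \in GLstab (Dmx P)) <-> (forall x y, P x -> ~~ P y -> g x y = 0).
Proof.
move=> sG sg; rewrite inE sG /=; split.
- move=> /eqP e x y Px Py.
  have ex : (delta_mx 0 x : V) \in subsp (Dmx P).
    rewrite subspP; apply/forallP => j; apply/implyP => Pj.
    rewrite mxE eqxx /=; case: (eqVneq j x) => [ej|_]; last by rewrite ?mulr0n.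
    by move: Pj; rewrite ej Px.
  have : s (delta_mx 0 x) \in subsp (Dmx P) by rewrite -e; apply: imset_f.
  rewrite subspP => /forallP /(_ y); rewrite Py /= sg -rowE mxE => /eqP //.
- move=> h; rewrite eqEcard card_imset ?leqnn ?andbT; last exact: perm_inj.
  apply/subsetP => _ /imsetP[v vU ->].
  move: vU; rewrite !subspP => /forallP vU; apply/forallP => j; apply/implyP => Pj.
  rewrite sg mxE big1 // => k _.
  case: (boolP (P k)) => Pk; first by rewrite h // mulr0.
  by move: (vU k); rewrite Pk /= => /eqP ->; rewrite mul0r.
Qed.

End M.

Lemma bigcap_natP (T : finType) (F : nat -> {set T}) m n x :
  reflect (forall i, (m <= i < n)%N -> x \in F i) (x \in \bigcap_(m <= i < n) F i).
Proof.
have -> : (x \in \bigcap_(m <= i < n) F i) = all (fun i => x \in F i) (index_iota m n).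
  by elim: (index_iota m n) => [|i r IH]; rewrite ?big_nil ?big_cons ?inE ?IH.
apply: (iffP allP) => h i; [move=> hi; apply: h; by rewrite mem_index_iota
  | rewrite mem_index_iota; exact: h].
Qed.

Section Main.
Variables (p d : nat).
Local Notation V := (vec p d).

Definition mperm (g : 'M['F_p]_d) (gu : g \in unitmx) : {perm V} :=
  perm (can_inj (mulmxK gu)).

Lemma mpermE g (gu : g \in unitmx) v : mperm gu v = v *m g.
Proof. by rewrite permE. Qed.

Lemma mperm_GL g (gu : g \in unitmx) : mperm gu \in GLV p d.
Proof. rewrite inE; apply/existsP; exists g; rewrite gu /=; apply/forallP => v.
by rewrite mpermE. Qed.

End Main.

Theorem lemma3p4 (p d : nat) :
  prime p -> odd p -> (2 <= d)%N ->
  let l1 := ((d * (d + 1)) %/ 2 - 1)%N in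
  exists W : nat -> 'M['F_p]_d,
    let K := fun i => GLstab (W i) in
    [/\ AGLV p d \proper SymV p d,
        K 1%N \proper AGLV p d,
        (forall j : nat, (1 <= j < l1)%N ->
           \bigcap_(1 <= i < j.+2) K i \proper \bigcap_(1 <= i < j.+1) K i) &
        \bigcap_(1 <= i < l1.+1) K i = TV p d].
Proof.
move=> pp po d2 l1.
have el1 : l1 = (B d d - 1)%N by rewrite /l1 Bd.
clearbody l1; subst l1.
have d0 : (0 < d)%N by lia.
have d1 : (1 < d)%N by lia.
pose i0 : 'I_d := Ordinal d0.
pose i1 : 'I_d := Ordinal d1.
have i01 : i0 != i1 by [].
pose e0 : vec p d := delta_mx 0 i0.
pose e1 : vec p d := delta_mx 0 i1.
have e0E k : e0 0 k = (k == i0)%:R by rewrite mxE eqxx.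
have e1E k : e1 0 k = (k == i1)%:R by rewrite mxE eqxx.
have e0n0 : e0 != 0.
  apply/eqP => /rowP /(_ i0); rewrite e0E mxE eqxx => /eqP; by rewrite oner_eq0.
have e1n0 : e1 != 0.
  apply/eqP => /rowP /(_ i1); rewrite e1E mxE eqxx => /eqP; by rewrite oner_eq0.
have e01 : e0 != e1.
  apply/eqP => /rowP /(_ i0); rewrite e0E e1E eqxx (negbTE i01) => /eqP; by rewrite oner_eq0.
exists (fun i => @Dmx p d (fun k : 'I_d => inI (dec d i.-1) k)) => K.
have KP i (s : {perm vec p d}) g : s \in GLV p d -> (forall v, s v = v *m g) ->
  (s \in K i <-> forall x y : 'I_d, inI (dec d i.-1) x -> ~~ inI (dec d i.-1) y -> g x y = 0).
  by move=> sG sg; rewrite /K; exact: stabP.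
split.
- rewrite /SymV properT; apply/eqP => eA.
  pose t := tperm (0 : vec p d) e0.
  have : t \in AGLV p d by rewrite eA inE.
  rewrite inE => /existsP[g /existsP[u /andP[_ /forallP h]]].
  have tv v : t v = v *m g + u by apply/eqP.
  have e01n0 : e0 + e1 != 0.
    apply/eqP => /rowP /(_ i0); rewrite !mxE !eqxx (negbTE i01) addr0 => /eqP; by rewrite oner_eq0.
  have e01e0 : e0 + e1 != e0 by rewrite -subr_eq0 addrC addKr.
  have t0 : t 0 = e0 by rewrite tpermL.
  have te0 : t e0 = 0 by rewrite tpermR.
  have te1 : t e1 = e1 by rewrite tpermD // eq_sym.
  have te01 : t (e0 + e1) = e0 + e1 by rewrite tpermD // eq_sym.
  have : t 0 + t (e0 + e1) = t e0 + t e1.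
    rewrite !tv mul0mx mulmxDl add0r !addrA; congr (_ + _).
    by rewrite [u + _]addrC.
  rewrite t0 te0 te1 te01 add0r => hh.
  have h2 : e0 + e0 = 0 by apply: (@addIr _ e1); rewrite add0r -addrA.
  move: h2 => /rowP /(_ i0); rewrite !mxE !eqxx /= => /eqP.
  rewrite -mulr2n -(dvdn_pcharf (pchar_Fp pp)) => /(dvdn_leq (isT : (0 < 2)%N)) => p2.
  have := prime_gt1 pp => p1.
  have ep : p = 2%N by lia.
  by rewrite ep in po.
- have KG : K 1%N \subset GLV p d by apply/subsetP => s; rewrite inE => /andP[].
  apply/properP; split.
    apply/subsetP => s /(subsetP KG) sG; have [g gu sg] := GLVP sG.
    rewrite inE; apply/existsP; exists g; apply/existsP; exists 0; rewrite gu /=.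
    by apply/forallP => v; rewrite sg addr0.
  pose tau := perm (@addIr _ e0).
  exists tau.
    rewrite inE; apply/existsP; exists 1%:M; apply/existsP; exists e0.
    rewrite unitmx1 /=; apply/forallP => v; by rewrite permE mulmx1.
  apply/negP => /(subsetP KG) /GLVP [g _ sg].
  move: (sg 0); rewrite permE mul0mx add0r => e; by rewrite e eqxx in e0n0.
- move=> j /andP[j1 jl].
  have [x [y [xd yd xy /andP[inx iny] prev]]] := @step_wit d j d2 jl.
  pose X : 'I_d := Ordinal xd; pose Y : 'I_d := Ordinal yd.
  have XY : X != Y by [].
  pose E : 'M['F_p]_d := delta_mx X Y.
  have EE : E *m E = 0 by rewrite mul_delta_mx_cond eq_sym (negbTE XY) mulr0n.
  pose g := 1%:M + E.
  have gu : g \in unitmx.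
    have [] // := @mulmx1_unit _ _ g (1%:M - E).
    by rewrite mulmxDl mulmxBr !mul1mx mulmxBr mulmx1 EE subr0 subrK.
  have gE a b : g a b = (a == b)%:R + ((a == X) && (b == Y))%:R by rewrite !mxE.
  have sG := mperm_GL gu; have sg := mpermE gu.
  apply/properP; split.
    apply/subsetP => t /bigcap_natP h; apply/bigcap_natP => i /andP[ii1 ii2]; apply: h; clear -ii1 ii2; lia.
  exists (mperm gu).
    apply/bigcap_natP => i /andP[ii1 ii2]; apply/(KP _ _ _ sG sg) => a b Pa Pb.
    have ab : a != b by apply/eqP => e; subst; rewrite Pa in Pb.
    rewrite gE (negbTE ab) add0r.
    case: (eqVneq a X) => [eaX|_]; last by rewrite andFb mulr0n.
    case: (eqVneq b Y) => [ebY|_]; last by rewrite andbF mulr0n.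
    subst a b; have := prev i.-1 (ltac:(clear -ii1 ii2; lia)) Pa; by rewrite (negbTE Pb).
  apply/negP => /bigcap_natP /(_ j.+1 (ltac:(clear -j1; lia))).
  move/(KP _ _ _ sG sg) => /(_ X Y inx iny).
  rewrite gE (negbTE XY) !eqxx add0r => /eqP; by rewrite oner_eq0.
- have B2 : B d 2 = (d + (d - 1))%N by rewrite /=; clear -d2; lia.
  have Bm2 : (B d 2 <= B d d)%N by apply: B_mono; clear -d2; lia.
  apply/setP => s; apply/idP/idP.
  + move=> /bigcap_natP h.
    have := h 1%N (ltac:(clear -B2 Bm2 d2; lia)); rewrite /K inE => /andP[sG _].
    have [g gu sg] := GLVP sG.
    rewrite inE; apply/existsP; exists g; rewrite gu /=; apply/andP; split.
      apply/forallP => a; apply/forallP => b; apply/implyP => ab.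
      have [m ml /andP[ia ib]] := @sep d a b d2 (ltn_ord a) (ltn_ord b) ab.
      have := h m.+1 (ltac:(clear -ml; lia)); move/(KP _ _ _ sG sg) => /(_ a b ia ib) ->.
      by rewrite eqxx.
    by apply/forallP => v; rewrite sg.
  + rewrite inE => /existsP[g /and3P[gu /forallP dg /forallP sg']].
    have sg v : s v = v *m g by apply/eqP.
    have sG : s \in GLV p d.
      by rewrite inE; apply/existsP; exists g; rewrite gu; apply/forallP.
    apply/bigcap_natP => i _; apply/(KP _ _ _ sG sg) => a b Pa Pb.
    have ab : a != b by apply/eqP => e; subst; rewrite Pa in Pb.
    by move: (dg a) => /forallP /(_ b) /implyP /(_ ab) /eqP.
Qed.
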